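(* A fuzzy subset $\mu$ of a fuzzy $\Gamma$-hypersemigroup $(M,\circ)$ is a fuzzy $\Gamma$-hyper interior ideal of $(M,\circ)$ if and only if $(\chi_M\circ\alpha\circ\mu)\circ\beta\circ\chi_M\subseteq\mu$ for all $\alpha,\beta\in\Gamma$.
   Context: $M,\Gamma$ are nonempty sets; a fuzzy subset of $M$ is a map $M\to[0,1]$. A fuzzy $\Gamma$-hyperoperation assigns to each $(a,\gamma,b)\in M\times\Gamma\times M$ a fuzzy subset $a\circ\gamma\circ b$. For $a\in M$ and fuzzy $\mu$: $(a\circ\gamma\circ\mu)(r)=\bigvee_{t\in M}((a\circ\gamma\circ t)(r)\wedge\mu(t))$ if $\mu\ne0$, else $0$; $(\mu\circ\gamma\circ a)(r)=\bigvee_{t\in M}(\mu(t)\wedge(t\circ\gamma\circ a)(r))$ if $\mu\ne0$, else $0$. For fuzzy $\mu,\nu$: $(\mu\circ\gamma\circ\nu)(t)=\bigvee_{p,q\in M}(\mu(p)\wedge(p\circ\gamma\circ q)(t)\wedge\nu(q))$. $(M,\circ)$ is a fuzzy $\Gamma$-hypersemigroup if $(a\circ\alpha\circ b)\circ\beta\circ c=a\circ\alpha\circ(b\circ\beta\circ c)$ for all $a,b,c\in M$, $\alpha,\beta\in\Gamma$. $\chi_M$ is the constant function $1$. For fuzzy sets, $\mu\subseteq\nu$ means $\mu(x)\le\nu(x)$ for all $x$. A fuzzy subset $\mu$ is a fuzzy $\Gamma$-hyper interior ideal if $(x\circ\alpha\circ\mu)\circ\beta\circ y\subseteq\mu$ for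 all $x,y\in M$, $\alpha,\beta\in\Gamma$. *)

(* Defs.v *)
From HB Require Import structures.
From mathcomp Require Import all_boot all_order all_algebra.
From mathcomp Require Import boolp classical_sets reals.
Set Implicit Arguments. Unset Strict Implicit. Unset Printing Implicit Defensive.
Import Order.TTheory GRing.Theory Num.Theory.
Local Open Scope ring_scope.
Local Open Scope classical_set_scope.

Section FuzzyGamma.
Variables (R : realType) (M G : Type).

Definition is_fuzzy (mu : M -> R) : Prop := forall x, 0 <= mu x <= 1.

Definition is_fuzzy_hyperop (o : M -> G -> M -> M -> R) : Prop :=
  forall a g b, is_fuzzy (o a g b).

Definition fzero : M -> R := fun _ => 0.

Definition chiM : M -> R := fun _ => 1.

Definition elt_fz (o : M -> G -> M -> M -> R) (a : M) (g : G) (mu : M -> R)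
  : M -> R :=
  fun r => if `[< mu = fzero >] then 0
           else sup [set Num.min (o a g t r) (mu t) | t in [set: M]].

Definition fz_elt (o : M -> G -> M -> M -> R) (mu : M -> R) (g : G) (a : M)
  : M -> R :=
  fun r => if `[< mu = fzero >] then 0
           else sup [set Num.min (mu t) (o t g a r) | t in [set: M]].

Definition fz_fz (o : M -> G -> M -> M -> R) (mu : M -> R) (g : G) (nu : M -> R)
  : M -> R :=
  fun t => sup [set x | exists p q,
                  x = Num.min (mu p) (Num.min (o p g q t) (nu q))].

Definition is_fuzzy_hypersemigroup (o : M -> G -> M -> M -> R) : Prop :=
  forall a b c al be, fz_elt o (o a al b) be c = elt_fz o a al (o b be c).

Definition fsubset (mu nu : M -> R) : Prop := forall x, mu x <= nu x.

Definition is_fuzzy_hyper_interior_ideal (o : M -> G -> M -> M -> R)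
  (mu : M -> R) : Prop :=
  forall x y al be, fsubset (fz_elt o (elt_fz o x al mu) be y) mu.

End FuzzyGamma.

(* Main.v *)
Require Import Defs.
From mathcomp Require Import all_boot all_order all_algebra.
From mathcomp Require Import boolp classical_sets reals.
Import Order.TTheory GRing.Theory Num.Theory.
Local Open Scope ring_scope.
Local Open Scope classical_set_scope.

Lemma sup_le_iff (R : realType) (S : set R) m :
  S !=set0 -> (forall e, S e -> e <= 1) ->
  (sup S <= m <-> forall e, S e -> e <= m).
Proof.
move=> S0 Sb; split.
- move=> H e Se; apply: le_trans H; apply: ub_le_sup => //; by exists 1.
- by move=> H; apply: ge_sup.
Qed.

Lemma min_sup_le (R : realType) (S : set R) c m :
  S !=set0 -> (forall e, S e -> e <= 1) ->
  (Num.min (sup S) c <= m <-> forall e, S e -> Num.min e c <= m).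
Proof.
move=> S0 Sb; rewrite ge_min; split.
- case/orP=> [H|H] e Se; rewrite ge_min; last by rewrite H orbT.
  by rewrite ((@sup_le_iff _ _ m S0 Sb).1 H e Se).
- move=> H; case: (leP c m) => hc; first by rewrite orbT.
  rewrite orbF; apply/(@sup_le_iff _ _ m S0 Sb) => e Se.
  by move: (H e Se); rewrite ge_min (lt_geF hc) orbF.
Qed.

Section S.
Variables (R : realType) (M G : Type) (HM : inhabited M).
Variables (o : M -> G -> M -> M -> R) (Ho : is_fuzzy_hyperop o).
Variables (mu : M -> R) (Hmu : is_fuzzy mu).

Lemma o1 a g b r : o a g b r <= 1. Proof. by case/andP: (Ho a g b r). Qed.
Lemma mu1 t : mu t <= 1. Proof. by case/andP: (Hmu t). Qed.
Lemma mu0 t : 0 <= mu t. Proof. by case/andP: (Hmu t). Qed.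

Lemma L_elt_fz x al r c m : 0 <= m ->
  (Num.min (elt_fz o x al mu r) c <= m <->
   forall t, Num.min (Num.min (o x al t r) (mu t)) c <= m).
Proof.
move=> m0; rewrite /elt_fz; case: asboolP => [hz|hz].
- split=> _ //; last by rewrite ge_min m0.
  by move=> t; rewrite hz /fzero !ge_min m0 !orbT.
- have [t0] := HM.
  rewrite min_sup_le; last first.
  + by move=> e [t _ <-]; rewrite ge_min mu1 orbT.
  + by exists (Num.min (o x al t0 r) (mu t0)), t0.
  split=> H; first by move=> t; apply: H; exists t.
  by move=> e [t _ <-]; apply: H.
Qed.

Lemma L_fz_elt B be y s m : 0 <= m ->
  (fz_elt o B be y s <= m <->
   forall r, Num.min (B r) (o r be y s) <= m).
Proof.
move=> m0; rewrite /fz_elt; case: asboolP => [hz|hz].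
- split=> _ //; by move=> r; rewrite hz /fzero ge_min m0.
- have [t0] := HM.
  rewrite sup_le_iff; last first.
  + by move=> e [t _ <-]; rewrite ge_min o1 orbT.
  + by exists (Num.min (B t0) (o t0 be y s)), t0.
  split=> H; first by move=> t; apply: H; exists t.
  by move=> e [t _ <-]; apply: H.
Qed.

Lemma L_side1 : is_fuzzy_hyper_interior_ideal o mu <->
  (forall al be x t r y s,
     Num.min (Num.min (o x al t r) (mu t)) (o r be y s) <= mu s).
Proof.
split.
- move=> H al be x t r y s.
  have := H x y al be s; move/(L_fz_elt _ _ _ _ _ (mu0 s)) => H1.
  by have := H1 r; move/(L_elt_fz _ _ _ _ _ (mu0 s)); apply.
- move=> H x y al be s; apply/(L_fz_elt _ _ _ _ _ (mu0 s)) => r.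
  by apply/(L_elt_fz _ _ _ _ _ (mu0 s)) => t; apply: H.
Qed.

Lemma L_side2 :
  (forall al be : G,
     fsubset (fz_fz o (fz_fz o (@chiM R M) al mu) be (@chiM R M)) mu) <->
  (forall al be x t r y s,
     Num.min (Num.min (o x al t r) (mu t)) (o r be y s) <= mu s).
Proof.
have [t0] := HM.
have E1 : forall al be s,
  (fz_fz o (fz_fz o (@chiM R M) al mu) be (@chiM R M) s <= mu s <->
   forall x t r y,
     Num.min (Num.min (o x al t r) (mu t)) (o r be y s) <= mu s).
  move=> al be s; rewrite /fz_fz sup_le_iff; last first.
  + by move=> e [p [q ->]]; rewrite !ge_min /chiM lexx !orbT.
  + by eexists; exists t0, t0.
  split.
  - move=> H x t r y; have := H _ (ex_intro _ r (ex_intro _ y erefl)).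
    rewrite /chiM (@min_l _ _ _ 1) ?o1 //.
    rewrite min_sup_le; last first.
    + by move=> e [p [q ->]]; rewrite !ge_min lexx.
    + by eexists; exists t0, t0.
    move=> H2; have := H2 _ (ex_intro _ x (ex_intro _ t erefl)).
    by rewrite (@min_r _ _ 1) // ge_min o1.
  - move=> H e [r [y ->]].
    rewrite /chiM (@min_l _ _ _ 1) ?o1 //.
    rewrite min_sup_le; last first.
    + by move=> e' [p [q ->]]; rewrite !ge_min lexx.
    + by eexists; exists t0, t0.
    move=> e' [x [t ->]].
    by rewrite (@min_r _ _ 1) ?H // ge_min o1.
split.
- by move=> H al be x t r y s; apply/(E1 al be s).1; apply: H.
- by move=> H al be s; apply/E1 => x t r y; apply: H.
Qed.

End S.

Theorem theorem4p16 (R : realType) (M G : Type)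
  (HM : inhabited M) (HG : inhabited G)
  (o : M -> G -> M -> M -> R)
  (Ho : is_fuzzy_hyperop o)
  (Hsg : is_fuzzy_hypersemigroup o)
  (mu : M -> R) (Hmu : is_fuzzy mu) :
  is_fuzzy_hyper_interior_ideal o mu <->
  (forall al be : G,
     fsubset (fz_fz o (fz_fz o (@chiM R M) al mu) be (@chiM R M)) mu).
Proof.
by rewrite (@L_side1 _ _ _ HM _ Ho _ Hmu) (@L_side2 _ _ _ HM _ Ho mu).
Qed.
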